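(* Let $\mathcal{P}=\mathbb{Z}_N=\langle\theta\rangle$ and let $\mathcal{O}\subseteq\mathcal{P}^2$ be a minimally closed set of boundary conditions under the action of $\mathrm{SL}(2,\mathbb{Z})$. Then for every $x\in\mathcal{O}$ there exist $m\in\mathbb{Z}$ and $V\in\mathrm{SL}(2,\mathbb{Z})$ such that $x\ast V=(1,\theta^m)\in\mathcal{O}$.
   Context: Boundary conditions are elements of $\mathcal{P}^2=\mathcal{P}\times\mathcal{P}$. The right action of $V=\begin{pmatrix} a&b\\c&d\end{pmatrix}\in\mathrm{SL}(2,\mathbb{Z})$ is $(g,h)\ast V=(g^ah^{-c},g^{-b}h^d)$. A subset is closed if it is mapped into itself by every $V\in\mathrm{SL}(2,\mathbb{Z})$; a closed set is minimally closed if it is nonempty and contains no nonempty proper closed subset. *)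

(* Defs.v *)
From mathcomp Require Import all_boot all_order all_algebra all_fingroup.
Set Implicit Arguments. Unset Strict Implicit. Unset Printing Implicit Defensive.
Import GRing.Theory.

(* P is a finite cyclic group gT = <[theta]> (i.e. Z_N, written multiplicatively). *)

Definition zpow (gT : finGroupType) (g : gT) (z : int) : gT :=
  match z with
  | Posz n => (g ^+ n)%g
  | Negz n => (g ^- n.+1)%g
  end.

Definition SL2Z (V : 'M[int]_2) : Prop := (\det V)%R = 1%R.

Definition bc_act (gT : finGroupType) (x : gT * gT) (V : 'M[int]_2) : gT * gT :=
  let a := V ord0 ord0 in let b := V ord0 ord_max in let c := V ord_max ord0 in let d := V ord_max ord_max in
  ((zpow x.1 a * zpow x.2 (- c)%R)%g, (zpow x.1 (- b)%R * zpow x.2 d)%g).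

Definition bc_closed (gT : finGroupType) (O : {set gT * gT}) : Prop :=
  forall V : 'M[int]_2, SL2Z V -> forall x, x \in O -> bc_act x V \in O.

Definition bc_min_closed (gT : finGroupType) (O : {set gT * gT}) : Prop :=
  [/\ O != set0, bc_closed O &
      forall O' : {set gT * gT}, O' != set0 -> O' \subset O -> bc_closed O' -> O' = O].

(* Main.v *)
Require Import Defs.
From mathcomp Require Import all_boot all_order all_algebra all_fingroup.
Import GRing.Theory.

Definition M22 (a b c d : int) : 'M[int]_2 :=
  \matrix_(i < 2, j < 2) (if (i:nat) == 0%N then (if (j:nat) == 0%N then a else b)
                          else if (j:nat) == 0%N then c else d).

Lemma det_M22 a b c d : (\det (M22 a b c d) = a * d - b * c)%R.
Proof.
rewrite (expand_det_row _ ord0) !big_ord_recl big_ord0 /cofactor.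
rewrite !det_mx11 !mxE /= /bump /= expr0 expr1 mul1r mulN1r addr0 mulrN //.
Qed.

Lemma zpowN (gT : finGroupType) (g : gT) n : zpow g (- (Posz n))%R = ((g ^+ n)^-1)%g.
Proof. by case: n => [|n] /=; rewrite ?expg0 ?invg1. Qed.

Lemma actM (gT : finGroupType) (x : gT * gT) a b c d :
  bc_act x (M22 a b c d) = ((zpow x.1 a * zpow x.2 (- c)%R)%g, (zpow x.1 (- b)%R * zpow x.2 d)%g).
Proof. by rewrite /bc_act !mxE. Qed.

Theorem lemma2p10 (gT : finGroupType) (theta : gT)
  (Hgen : <[theta]>%g = [set: gT])
  (O : {set gT * gT}) (HO : bc_min_closed O) :
  forall x, x \in O ->
  exists (m : int) (V : 'M[int]_2),
    SL2Z V /\ bc_act x V = (1%g, zpow theta m) /\ (1%g, zpow theta m) \in O.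
Proof.
case: HO => _ Hcl _ x xO.
have gen y : exists n, y = (theta ^+ n)%g by apply/cycleP; rewrite Hgen inE.
suff [V [SV [y Hy]]] : exists V, SL2Z V /\ exists y, bc_act x V = (1%g, y).
  have [n Hn] := gen y.
  have Hy' : bc_act x V = (1%g, zpow theta n) by rewrite Hy Hn.
  exists (Posz n), V; split=> //; split=> //.
  by rewrite -Hy'; apply: Hcl.
case: x xO => g h _.
have [p ->] := gen g; have [q ->] := gen h.
have [p0|pP] := eqVneq p 0%N.
  exists (M22 1 0 0 1); split; first by rewrite /SL2Z det_M22 mulr1 mul0r subr0.
  by rewrite actM p0 /= !expg0 expg1n mul1g; eexists.
set e := gcdn p q.
have eP : (0 < e)%N by rewrite gcdn_gt0 lt0n pP.
have [u [v Huv]] := Bezoutz (Posz p) (Posz q).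
exists (M22 (Posz (q %/ e)) (- u)%R (Posz (p %/ e)) v); split.
  rewrite /SL2Z det_M22 mulNr opprK.
  apply: (@mulIf _ (Posz e)); first by rewrite eqz_nat -lt0n.
  rewrite mul1r mulrDl -!mulrA -!PoszM divnK ?dvdn_gcdl ?divnK ?dvdn_gcdr //.
  by rewrite mulrCA -PoszM divnK ?dvdn_gcdr // addrC Huv.
rewrite /bc_act !mxE /= zpowN -!expgM muln_divCA_gcd mulgV; eexists; reflexivity.
Qed.
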